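(* For all $0\le i\le r$ and all $\beta\in\Gamma_{i-1}$, the following identity of rational functions holds: $\pi_{i+1}^{\beta}/\pi_i^{\beta}=Y_i^{L_i(\beta)}$ (here $L_i(\beta)\in\mathbb Z$).
   Context: Let $(K,v)$ be a valued field with non-trivial value group $\Gamma$; $\Gamma_{\mathbb Q}=\Gamma\otimes\mathbb Q$. Let $\phi_0,\dots,\phi_r\in K[x]$ be the key polynomials and $\gamma_0,\dots,\gamma_r\in\Gamma_{\mathbb Q}$ the values of a MacLane chain $\mu_{-\infty}\xrightarrow{\phi_0,\gamma_0}\mu_0\to\cdots\xrightarrow{\phi_r,\gamma_r}\mu_r$ of augmented valuations on $K[x]$. Put $\Gamma_{\mu_{-1}}=\Gamma$; then $\Gamma_{\mu_i}=\langle\Gamma_{\mu_{i-1}},\gamma_i\rangle$, $e_i=(\Gamma_{\mu_i}:\Gamma_{\mu_{i-1}})<\infty$, $h_i=e_i\gamma_i\in\Gamma_{\mu_{i-1}}$. Fix a finitely generated $\Gamma_{-1}\subseteq\Gamma$ with $h_i\in\Gamma_{-1}+\langle\gamma_0,\dots,\gamma_{i-1}\rangle$ for all $i$; $\Gamma_i=\langle\Gamma_{-1},\gamma_0,\dots,\gamma_i\rangle$ (free of common rank $n$, $h_i\in\Gamma_{i-1}$). Fix a $\mathbb Z$-basis $\iota_{0,1},\dots,\iota_{0,n}$ of $\Gamma_{-1}$; recursively, given the basis $\iota_{i,\cdot}$ of $\Gamma_{i-1}$, write $\gamma_i=\sum_j(h_{i,j}/e_{i,j})\iota_{i,j}$ (coprime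 integers, $e_{i,j}>0$), $e'_{i,1}=d_{i,1}=1$, $e'_{i,j}=e_{i,1}\cdots e_{i,j-1}/(d_{i,1}\cdots d_{i,j-1})$, $d_{i,j}=\gcd(e_{i,j},e'_{i,j})$ ($j>1$); let $\ell_{i,j},\ell'_{i,j}$ be the integers with $\ell_{i,j}h_{i,j}e'_{i,j}+\ell'_{i,j}e_{i,j}=d_{i,j}$, $0\le\ell_{i,j}<e_{i,j}/d_{i,j}$; $(\iota_{i+1,1}\cdots\iota_{i+1,n})=(\iota_{i,1}\cdots\iota_{i,n})Q_i$, $Q_i$ lower triangular with diagonal $d_{i,j}/e_{i,j}$ and $(m,j)$-entry $\ell_{i,j}e'_{i,j}h_{i,m}/e_{i,m}$ ($m>j$), a basis of $\Gamma_i$. Choose $\pi_{0,j}\in K^*$ with $v(\pi_{0,j})=\iota_{0,j}$; for $0\le i\le r$, $\pi_{i+1,j}=\big(\phi_i\pi_{i,1}^{-h_{i,1}/e_{i,1}}\cdots\pi_{i,j-1}^{-h_{i,j-1}/e_{i,j-1}}\big)^{\ell_{i,j}e'_{i,j}}\pi_{i,j}^{\ell'_{i,j}}$ (integer exponents). For $0\le i\le r+1$ and $\alpha=\sum_jn_j\iota_{i,j}\in\Gamma_{i-1}$ ($n_j\in\mathbb Z$), $\pi_i^\alpha=\prod_j\pi_{i,j}^{n_j}$ (note $\Gamma_{i-1}\subseteq\Gamma_i$, so $\pi_{i+1}^\beta$ is defined for $\beta\in\Gamma_{i-1}$); $Y_i=\phi_i^{e_i}\pi_i^{-h_i}$. Let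 $L_{i,j}=\ell_{i,j}\ell'_{i,j+1}\cdots\ell'_{i,n}$ and let $L_i\colon\Gamma_{i-1}\otimes\mathbb Q\to\mathbb Q$ be the $\mathbb Q$-linear map with $L_i(\iota_{i,j})=L_{i,j}$. *)

(* Defs.v *)
From HB Require Import structures.
From mathcomp Require Import all_boot all_order all_algebra.
Set Implicit Arguments. Unset Strict Implicit. Unset Printing Implicit Defensive.
Import Order.TTheory GRing.Theory Num.Theory.
Local Open Scope ring_scope.
From mathcomp Require Import fraction.
Definition toK (K : fieldType) (p : {poly K}) : {fraction {poly K}} := @FracField.tofrac _ p.

(* Throughout, vectors of Gamma_{-1} (x) Q are written in coordinates w.r.t.
   the fixed Z-basis iota_{0,1..n} of Gamma_{-1} (columns 'cV[rat]_n).
   Indices j are 0-based ('I_n) instead of 1..n. *)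

(* ---- integer data attached to c = coordinates of gamma_i in the basis iota_{i,.} ---- *)
Definition hcoef n (c : 'cV[rat]_n) (j : 'I_n) : int := numq (c j 0).
Definition ecoef n (c : 'cV[rat]_n) (j : 'I_n) : int := denq (c j 0).
Definition ecn n (c : 'cV[rat]_n) (k : nat) : int :=
  if @insub nat (fun k => (k < n)%N) 'I_n k is Some j then denq (c j 0) else 1.
(* e'_{j} = prod_{k<j} e_k / prod_{k<j} d_k, computed as prod_{k<j} (e_k / d_k),
   with d_k = gcd(e_k, e'_k)  (d_1 = gcd(e_1,1) = 1, e'_1 = 1). *)
Fixpoint eprime n (c : 'cV[rat]_n) (k : nat) : int :=
  match k with
  | 0 => 1
  | k'.+1 => eprime c k' * ((ecn c k') %/ (gcdz (ecn c k') (eprime c k')))%Z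
  end.
Definition epcoef n (c : 'cV[rat]_n) (j : 'I_n) : int := eprime c j.
Definition dcoef n (c : 'cV[rat]_n) (j : 'I_n) : int := gcdz (ecoef c j) (epcoef c j).
(* ell_{i,j}: the integer 0 <= ell < e/d with ell*h*e' = d (mod e) *)
Definition ellcoef n (c : 'cV[rat]_n) (j : 'I_n) : int :=
  let h := hcoef c j in let e := ecoef c j in
  let e' := epcoef c j in let d := dcoef c j in
  (find (fun k : nat => (e %| k%:Z * h * e' - d)%Z) (iota 0 `|(e %/ d)%Z|))%:Z.
(* ell'_{i,j} determined by ell*h*e' + ell'*e = d *)
Definition ellpcoef n (c : 'cV[rat]_n) (j : 'I_n) : int :=
  ((dcoef c j - ellcoef c j * hcoef c j * epcoef c j) %/ ecoef c j)%Z.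

Definition Qmat n (c : 'cV[rat]_n) : 'M[rat]_n :=
  \matrix_(m, j)
    if m == j then (dcoef c j)%:~R / (ecoef c j)%:~R
    else if (j < m)%N then
      (ellcoef c j * epcoef c j)%:~R * (hcoef c m)%:~R / (ecoef c m)%:~R
    else 0.

(* Cmat g i : column j = coordinates (w.r.t. iota_0) of iota_{i,j};
   (iota_{i+1,.}) = (iota_{i,.}) Q_i. *)
Fixpoint Cmat n (g : nat -> 'cV[rat]_n) (i : nat) : 'M[rat]_n :=
  match i with
  | 0 => 1%:M
  | i'.+1 => Cmat g i' *m Qmat (invmx (Cmat g i') *m g i')
  end.
(* coordinates of gamma_i in the basis iota_{i,.} *)
Definition gcoord n (g : nat -> 'cV[rat]_n) (i : nat) : 'cV[rat]_n :=
  invmx (Cmat g i) *m g i.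

Fixpoint piv (K : fieldType) n (g : nat -> 'cV[rat]_n) (phi : nat -> {poly K})
    (pi0 : 'I_n -> K) (i : nat) : 'I_n -> {fraction {poly K}} :=
  match i with
  | 0 => fun j => toK (pi0 j)%:P
  | i'.+1 =>
      let c := gcoord g i' in
      let p := piv g phi pi0 i' in
      fun j =>
        toK (phi i') ^ (ellcoef c j * epcoef c j)
        * (\prod_(k < n | (k < j)%N)
             p k ^ (- ((hcoef c k * ellcoef c j * epcoef c j) %/ ecoef c k)%Z))
        * p j ^ (ellpcoef c j)
  end.

(* pi^alpha = prod_j p_j^{a_j}, where a = (integral) coordinates of alpha in the basis
   attached to p *)
Definition piexp (K : fieldType) n (p : 'I_n -> {fraction {poly K}}) (a : 'cV[rat]_n)
  : {fraction {poly K}} := \prod_j p j ^ numq (a j 0).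

(* pi_i^beta, beta given by its coordinates w.r.t. iota_0 *)
Definition piPow (K : fieldType) n g phi (pi0 : 'I_n -> K) (i : nat) (beta : 'cV[rat]_n) :=
  piexp (piv g phi pi0 i) (invmx (Cmat g i) *m beta).

(* Y_i = phi_i^{e_i} pi_i^{-h_i}, h_i = e_i gamma_i *)
Definition Yi (K : fieldType) n g phi (pi0 : 'I_n -> K) (e : nat -> nat) (i : nat) :=
  toK (phi i) ^+ e i * piPow g phi pi0 i (- ((e i)%:R *: g i)).

(* L_{i,j} = ell_{i,j} ell'_{i,j+1} ... ell'_{i,n};  L_i(beta) (rational a priori) *)
Definition Lcoef n (c : 'cV[rat]_n) (j : 'I_n) : int :=
  ellcoef c j * \prod_(k < n | (j < k)%N) ellpcoef c k.
Definition Lval n (g : nat -> 'cV[rat]_n) (i : nat) (beta : 'cV[rat]_n) : rat :=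
  \sum_j (invmx (Cmat g i) *m beta) j 0 * (Lcoef (gcoord g i) j)%:~R.

(* membership in Gamma_{mu_{i-1}} = < Gamma, gamma_0, ..., gamma_{i-1} > *)
Definition inGammaMu (V : lmodType rat) (Gam : {pred V}) (gam : nat -> V) (i : nat) (x : V) :=
  exists2 y, y \in Gam & exists b : nat -> int, x = y + \sum_(k < i) gam k *~ b k.

(* Main.v *)
Require Import Defs.
From HB Require Import structures.
From mathcomp Require Import all_boot all_order all_algebra.
Import Order.TTheory GRing.Theory Num.Theory.
Local Open Scope ring_scope.
From mathcomp Require Import fraction.
From mathcomp Require Import zify ring lra.

Module Helpers.
Set Implicit Arguments. Unset Strict Implicit.


Section Col.
Variables (n : nat) (c : 'cV[rat]_n).

Fixpoint lcmN (k : nat) : nat :=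
  match k with 0 => 1%N | k'.+1 => lcmn (lcmN k') `|ecn c k'|%N end.

Lemma ecn_gt0 k : 0 < ecn c k.
Proof. rewrite /ecn; case: insub => [j|] //; exact: denq_gt0. Qed.

Lemma ecnE (j : 'I_n) : ecn c j = ecoef c j.
Proof. by rewrite /ecn valK. Qed.

Lemma ecn_abs k : (`|ecn c k|%N)%:Z = ecn c k.
Proof. by rewrite gez0_abs // ltW // ecn_gt0. Qed.

Lemma lcmN_gt0 k : (0 < lcmN k)%N.
Proof.
elim: k => //= k IH; rewrite lcmn_gt0 IH /=.
have := ecn_gt0 k; rewrite -ecn_abs ltz_nat //.
Qed.

Lemma eprimeE k : eprime c k = (lcmN k)%:Z.
Proof.
elim: k => //= k IH.
rewrite IH -ecn_abs /gcdz !absz_nat divz_nat -PoszM /lcmn.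
by rewrite muln_divA ?dvdn_gcdl // gcdnC.
Qed.

Lemma dvd_lcmN m k : (m < k)%N -> (`|ecn c m| %| lcmN k)%N.
Proof.
elim: k => // k IH; rewrite ltnS leq_eqVlt => /orP[/eqP->|/IH H] /=.
  exact: dvdn_lcmr.
exact: dvdn_trans H (dvdn_lcml _ _).
Qed.

Lemma lcmN_dvd k M : (forall m, (m < k)%N -> (`|ecn c m| %| M)%N) -> (lcmN k %| M)%N.
Proof.
elim: k => [|k IH] H /=; first exact: dvd1n.
rewrite dvdn_lcm H // andbT IH // => m Hm; apply: H; exact: ltnW.
Qed.

Lemma e_gt0 j : 0 < ecoef c j.
Proof. exact: denq_gt0. Qed.

Lemma ep_gt0 k : 0 < eprime c k.
Proof. by rewrite eprimeE ltz_nat lcmN_gt0. Qed.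

Lemma d_gt0 j : 0 < dcoef c j.
Proof.
rewrite /dcoef /gcdz ltz_nat gcdn_gt0; apply/orP; left.
by rewrite absz_gt0 gt_eqF // e_gt0.
Qed.

Lemma ep_succ (j : 'I_n) : eprime c j.+1 * dcoef c j = eprime c j * ecoef c j.
Proof.
rewrite /= ecnE /dcoef /epcoef -mulrA divzK //; exact: dvdz_gcdl.
Qed.

Lemma d_dvd_e j : (dcoef c j %| ecoef c j)%Z.
Proof. exact: dvdz_gcdl. Qed.
Lemma d_dvd_ep j : (dcoef c j %| epcoef c j)%Z.
Proof. exact: dvdz_gcdr. Qed.

End Col.


Section Col2.
Variables (n : nat) (c : 'cV[rat]_n).

Lemma ell_prop j :
  (ecoef c j %| ellcoef c j * hcoef c j * epcoef c j - dcoef c j)%Z.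
Proof.
set h := hcoef c j; set e := ecoef c j; set ep := epcoef c j; set d := dcoef c j.
set P := (fun k : nat => (e %| k%:Z * h * ep - d)%Z).
set s := iota 0 `|(e %/ d)%Z|.
suff Hs : has P s.
  have := nth_find 0%N Hs; rewrite /ellcoef -/h -/e -/ep -/d -/P -/s.
  by rewrite nth_iota ?add0n // -(size_iota 0 `|(e %/ d)%Z|) -/s -has_find.
have he : 0 < e by apply: e_gt0.
have hd : 0 < d by apply: d_gt0.
have [D hD] : exists D, D * d = e by exists (e %/ d)%Z; rewrite divzK // d_dvd_e.
have [F hF] : exists F, F * d = ep by exists (ep %/ d)%Z; rewrite divzK // d_dvd_ep.
have hDe : (e %/ d)%Z = D by rewrite -hD mulzK // gt_eqF.
have hDp : 0 < D by move: hD he hd; nia.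
have cop : coprimez e h.
  by rewrite /coprimez /e /h /ecoef /hcoef gcdzC; have := coprime_num_den (c j 0); rewrite /coprime.
have [u [v huv]] := Bezoutz (h * ep) e.
have hg : gcdz (h * ep) e = d by rewrite gcdzC Gauss_gcdzr // /d /dcoef.
rewrite hg in huv.
set k := (u %% D)%Z.
have k0 : 0 <= k by rewrite modz_ge0 // gt_eqF.
have k1 : k < D by rewrite ltz_pmod.
set q := (u %/ D)%Z.
have hu : u = q * D + k by rewrite [u in LHS](divz_eq u D).
apply/hasP; exists `|k|%N.
  rewrite mem_iota add0n hDe /=; lia.
rewrite /P gez0_abs //.
apply/dvdzP; exists (- (v + q * h * F)).
have -> : k = u - q * D by rewrite hu; ring.
rewrite -huv -hF -hD; ring.
Qed.

Lemma bez j : ellcoef c j * hcoef c j * epcoef c j + ellpcoef c j * ecoef c j = dcoef c j.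
Proof.
rewrite /ellpcoef divzK; first ring.
by rewrite -rpredN opprB ell_prop.
Qed.

End Col2.


Section Col3.
Variables (n : nat) (c : 'cV[rat]_n).
Local Notation Q := (Qmat c).
Local Notation w j := (((ellcoef c j * epcoef c j)%:~R : rat)).

Lemma cE j : c j 0 = (hcoef c j)%:~R / (ecoef c j)%:~R.
Proof. by rewrite divq_num_den. Qed.

Lemma QE m j : Q m j = if m == j then (dcoef c j)%:~R / (ecoef c j)%:~R
                       else if (j < m)%N then w j * c m 0 else 0.
Proof. by rewrite mxE cE mulrA. Qed.

Lemma e_neq0 j : ((ecoef c j)%:~R : rat) != 0.
Proof. by rewrite intr_eq0 gt_eqF // e_gt0. Qed.
Lemma d_neq0 j : ((dcoef c j)%:~R : rat) != 0.
Proof. by rewrite intr_eq0 gt_eqF //; apply: d_gt0. Qed.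
Lemma ep_neq0 k : ((eprime c k)%:~R : rat) != 0.
Proof. by rewrite intr_eq0 gt_eqF //; apply: ep_gt0. Qed.

Lemma R2q j : w j * c j 0 + (ellpcoef c j)%:~R = (dcoef c j)%:~R / (ecoef c j)%:~R.
Proof.
have := e_neq0 j; rewrite cE -(bez c j) /epcoef => he.
rewrite !(rmorphD, rmorphM) /=; field; exact: he.
Qed.

Lemma R1q (j : 'I_n) : ((eprime c j.+1)%:~R : rat) =
   (eprime c j)%:~R * (ecoef c j)%:~R / (dcoef c j)%:~R.
Proof.
have hd := d_neq0 j.
apply: (canRL (mulfK hd)); by rewrite -!rmorphM /= ep_succ.
Qed.

Lemma divz_q (a b : int) : (b %| a)%Z -> ((a %/ b)%Z%:~R : rat) = a%:~R / b%:~R.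
Proof.
have [->|hb] := eqVneq b 0; first by rewrite divz0 invr0 mulr0.
move=> hab; apply: (canRL (mulfK _)); first by rewrite intr_eq0.
by rewrite -rmorphM /= divzK.
Qed.

Lemma e_dvd_ep (m : 'I_n) k : (m < k)%N -> (ecoef c m %| eprime c k)%Z.
Proof.
move=> hmk; rewrite eprimeE -ecnE -ecn_abs.
exact: (dvd_lcmN c hmk).
Qed.

Lemma wc_int (m j : 'I_n) : (m < j)%N -> w j * c m 0 \is a Num.int.
Proof.
move=> hmj; rewrite cE mulrA -rmorphM /=.
apply: Qint_dvdz; apply: dvdz_mulr; apply: dvdz_mull; exact: e_dvd_ep.
Qed.

End Col3.


Section Col4.
Variables (n : nat) (c : 'cV[rat]_n).
Local Notation Q := (Qmat c).
Local Notation w j := (((ellcoef c j * epcoef c j)%:~R : rat)).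

Definition inW (v : 'cV[rat]_n) :=
  exists2 u : 'cV[rat]_n, u \is a mxOver Num.int & v = Q *m u.

Lemma inW0 : inW 0.
Proof. by exists 0; [apply/mxOverP => a b; rewrite mxE | rewrite mulmx0]. Qed.

Lemma inWD u v : inW u -> inW v -> inW (u + v).
Proof.
move=> [a ha ->] [b hb ->]; exists (a + b); last by rewrite mulmxDr.
apply/mxOverP => x y; rewrite mxE rpredD //; by [move/mxOverP: ha | move/mxOverP: hb].
Qed.

Lemma inWZ a v : a \is a Num.int -> inW v -> inW (a *: v).
Proof.
move=> hz [b hb ->]; exists (a *: b); last by rewrite scalemxAr.
apply/mxOverP => x y; rewrite mxE rpredM //; by move/mxOverP: hb.
Qed.

Lemma inWB u v : inW u -> inW v -> inW (u - v).
Proof. move=> hu hv; apply: inWD => //; rewrite -scaleN1r; exact: inWZ. Qed.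

Lemma inW_col j : inW (col j Q).
Proof.
exists (delta_mx j 0); last exact: colE.
by apply/mxOverP => x y; rewrite mxE; case: (_ && _).
Qed.

Definition tl k : 'cV[rat]_n := \col_m (if (k <= m)%N then c m 0 else 0).

Lemma key1 (j : 'I_n) : ((eprime c j)%:~R : rat) =
  ((epcoef c j %/ dcoef c j)%Z * hcoef c j)%:~R * w j
  + (ellpcoef c j)%:~R * (eprime c j.+1)%:~R.
Proof.
rewrite R1q rmorphM /= divz_q ?d_dvd_ep //.
have hd := d_neq0 c j; have he := e_neq0 c j.
rewrite /epcoef -(bez c j) /epcoef in hd *.
rewrite !(rmorphD, rmorphM) /= in hd *; field; exact: hd.
Qed.

Lemma key2 (j : 'I_n) : ((ecoef c j %/ dcoef c j)%Z%:~R : rat) * w j =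
   (ellcoef c j)%:~R * (eprime c j.+1)%:~R.
Proof. rewrite R1q divz_q ?d_dvd_e // rmorphM /epcoef /=; ring. Qed.

Lemma tl_step k (hk : (k < n)%N) :
  let j := Ordinal hk in
  (eprime c k)%:~R *: tl k =
   ((epcoef c j %/ dcoef c j)%Z * hcoef c j)%:~R *: col j Q
   + (ellpcoef c j)%:~R *: ((eprime c k.+1)%:~R *: tl k.+1).
Proof.
move=> j; apply/matrixP => m i; rewrite (ord1 i) !mxE.
have -> : (m == j) = (nat_of_ord m == k) by [].
have -> : (j < m)%N = (k < m)%N by [].
case: (ltngtP m k) => h.
- by rewrite !mulr0 addr0.
- rewrite (key1 j) cE; ring.
- have -> : m = j by apply: val_inj.
  rewrite !mulr0 addr0 cE rmorphM /= divz_q ?d_dvd_ep // /epcoef /=.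
  have hd := d_neq0 c j; have he := e_neq0 c j; field; by rewrite hd he.
Qed.

Lemma delta_step (j : 'I_n) :
  delta_mx j 0 =
   ((ecoef c j %/ dcoef c j)%Z%:~R) *: col j Q
   - (ellcoef c j)%:~R *: ((eprime c j.+1)%:~R *: tl j.+1).
Proof.
apply/matrixP => m i; rewrite (ord1 i) !mxE eqxx andbT.
have -> : (m == j) = (nat_of_ord m == j) by [].
case: (ltngtP m j) => h.
- by rewrite !mulr0 subr0.
- by rewrite cE !mulrA (key2 j) subrr.
  rewrite !mulr0 subr0 divz_q ?d_dvd_e // /= mulr1n.
  have hd := d_neq0 c j; have he := e_neq0 c j; field; by rewrite hd he.
Qed.

Lemma inW_tl t : forall k, (n - k = t)%N -> (k <= n)%N -> inW ((eprime c k)%:~R *: tl k).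
Proof.
elim: t => [|t IH] k hnk hkn.
  have -> : tl k = 0.
    apply/matrixP => m i; rewrite !mxE; case: leqP => // hkm; have := ltn_ord m; move=> hm; exfalso.
    have h1 : (k < n)%N := leq_ltn_trans hkm hm.
    by move/eqP: hnk; rewrite subn_eq0 leqNgt h1.
  have -> : (eprime c k)%:~R *: (0:'cV[rat]_n) = 0 by apply/matrixP=> a b; rewrite !mxE mulr0.
  exact: inW0.
have hk : (k < n)%N by lia.
rewrite (tl_step hk); apply: inWD.
  apply: inWZ; [exact: intr_int | exact: inW_col].
apply: inWZ; first exact: intr_int.
apply: IH; lia.
Qed.

Lemma inW_delta (j : 'I_n) : inW (delta_mx j 0).
Proof.
rewrite delta_step; apply: inWB.
  apply: inWZ; [exact: intr_int | exact: inW_col].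
apply: inWZ; first exact: intr_int.
by apply: (inW_tl (erefl _)).
Qed.

Lemma inW_c : inW c.
Proof.
have := inW_tl (erefl _) (leq0n n).
have -> : tl 0 = c by apply/matrixP => m i; rewrite !mxE (ord1 i).
by rewrite /= scale1r.
Qed.

End Col4.


Lemma entry_aux n (A : 'M[rat]_n) (z c : 'cV[rat]_n) (w : 'I_n -> rat) m :
  (A *m z - (\sum_j z j 0 * w j) *: c) m 0 = \sum_j z j 0 * (A m j - w j * c m 0).
Proof.
rewrite !mxE mulr_suml -sumrB; apply: eq_bigr => j _; ring.
Qed.

Section Col5.
Variables (n : nat) (c : 'cV[rat]_n).
Local Notation Q := (Qmat c).
Local Notation w j := (((ellcoef c j * epcoef c j)%:~R : rat)).

Lemma Qright : exists2 U : 'M[rat]_n, U \is a mxOver Num.int & Q *m U = 1%:M.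
Proof.
have [u hu hd] := fin_all_exists2 (inW_delta c).
exists (\matrix_(a, b) u b a 0).
  by apply/mxOverP => a b; rewrite mxE; move/mxOverP: (hu b).
apply/matrixP => a b.
have := congr1 (fun M : 'cV[rat]_n => M a 0) (hd b); rewrite !mxE eqxx andbT => ->.
by apply: eq_bigr => k _; rewrite !mxE.
Qed.

Lemma Q_unit : Q \in unitmx.
Proof. have [U _ h] := Qright; by case: (mulmx1_unit h). Qed.

Lemma invQ_int : invmx Q \is a mxOver Num.int.
Proof.
have [U hU h] := Qright.
suff -> : invmx Q = U by [].
by rewrite -[invmx Q]mulmx1 -h mulmxA mulVmx ?mul1mx // Q_unit.
Qed.

Lemma invQc_int : invmx Q *m c \is a mxOver Num.int.
Proof. have [u hu hc] := inW_c c; by rewrite [X in _ *m X]hc mulKmx // Q_unit. Qed.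

Lemma Qz_decomp (z : 'cV[rat]_n) : z \is a mxOver Num.int ->
  exists2 u : 'cV[rat]_n, u \is a mxOver Num.int & Q *m z = u + (\sum_j z j 0 * w j) *: c.
Proof.
move=> hz; exists (Q *m z - (\sum_j z j 0 * w j) *: c); last by rewrite subrK.
apply/mxOverP => m i; rewrite (ord1 i) entry_aux; apply: rpred_sum => j _.
apply: rpredM; first by move/mxOverP: hz.
rewrite QE; case: eqP => [->|hmj].
  by rewrite -(R2q c j) addrC addKr intr_int.
case: (ltnP j m) => hjm; first by rewrite subrr rpred0.
rewrite sub0r rpredN; apply: wc_int.
by rewrite ltn_neqAle hjm andbT; apply/eqP => h; apply: hmj; apply: val_inj.
Qed.

Lemma t_int (z : 'cV[rat]_n) : z \is a mxOver Num.int -> (\sum_j z j 0 * w j) \is a Num.int.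
Proof.
move=> hz; apply: rpred_sum => j _; apply: rpredM; last exact: intr_int.
by move/mxOverP: hz.
Qed.

End Col5.


Section Col6.
Variables (n : nat) (c : 'cV[rat]_n).
Local Notation Q := (Qmat c).
Local Notation w j := (((ellcoef c j * epcoef c j)%:~R : rat)).

Definition lpN k : rat := if (insub k : option 'I_n) is Some j then (ellpcoef c j)%:~R else 0.
Definition lN k : rat := if (insub k : option 'I_n) is Some j then (ellcoef c j)%:~R else 0.
Definition cN k : rat := if (insub k : option 'I_n) is Some j then c j 0 else 0.
Definition PP a : rat := \prod_(a <= k < n) lpN k.
Local Notation epN k := (((eprime c k)%:~R : rat)).

Lemma lpN_ord (j : 'I_n) : lpN j = (ellpcoef c j)%:~R.
Proof. by rewrite /lpN valK. Qed.
Lemma lN_ord (j : 'I_n) : lN j = (ellcoef c j)%:~R.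
Proof. by rewrite /lN valK. Qed.
Lemma cN_ord (j : 'I_n) : cN j = c j 0.
Proof. by rewrite /cN valK. Qed.

Lemma Lcoef_q (m : 'I_n) : ((Lcoef c m)%:~R : rat) = lN m * PP m.+1.
Proof.
rewrite /Lcoef rmorphM rmorph_prod /= lN_ord /PP big_geq_mkord; congr (_ * _).
by apply: eq_big => [k|k _]; rewrite ?lpN_ord.
Qed.

Lemma step_tel m : (m < n)%N ->
  lN m * cN m * PP m.+1 = PP m.+1 / epN m.+1 - PP m / epN m.
Proof.
move=> hm; set j := Ordinal hm.
have -> : PP m = lpN m * PP m.+1 by rewrite /PP big_ltn.
have e1 : lN m = (ellcoef c j)%:~R by rewrite -lN_ord.
have e2 : cN m = c j 0 by rewrite -cN_ord.
have e3 : lpN m = (ellpcoef c j)%:~R by rewrite -lpN_ord.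
have e4 : epN m.+1 = epN j.+1 by [].
rewrite e1 e2 e3 e4 R1q.
have h2 := R2q c j.
have hd := d_neq0 c j; have he := e_neq0 c j; have hp := ep_neq0 c j.
have -> : (ellpcoef c j)%:~R = (dcoef c j)%:~R / (ecoef c j)%:~R - w j * c j 0
  by rewrite -h2; ring.
rewrite rmorphM /epcoef /=.
field; by rewrite hd he hp.
Qed.

Lemma tel a : (a <= n)%N ->
  \sum_(a <= m < n) lN m * cN m * PP m.+1 = 1 / epN n - PP a / epN a.
Proof.
move=> han.
rewrite (telescope_sumr_eq (fun k => PP k / epN k)) //.
  by rewrite /PP big_geq.
move=> k /andP[_ hk]; exact: step_tel.
Qed.

Lemma COL (j : 'I_n) :
  \sum_(m < n) (Lcoef c m)%:~R * Q m j = w j / epN n.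
Proof.
have -> : \sum_(m < n) (Lcoef c m)%:~R * Q m j =
   \sum_(m < n) (if m == j then (Lcoef c j)%:~R * ((dcoef c j)%:~R / (ecoef c j)%:~R) else 0)
 + \sum_(m < n) (if (j < m)%N then w j * ((Lcoef c m)%:~R * c m 0) else 0).
  rewrite -big_split /=; apply: eq_bigr => m _; rewrite QE.
  case: eqP => [->|_]; first by rewrite ltnn addr0.
  case: ifP => _; [ring | by rewrite mulr0 addr0].
rewrite -big_mkcond big_pred1_eq -big_mkcond /= -mulr_sumr.
have -> : \sum_(m < n | (j < m)%N) (Lcoef c m)%:~R * c m 0 =
          \sum_(j.+1 <= k < n) lN k * cN k * PP k.+1.
  rewrite big_geq_mkord; apply: eq_big => [k|k _] //.
  by rewrite Lcoef_q cN_ord; ring.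
rewrite tel // Lcoef_q lN_ord R1q rmorphM /epcoef /=.
have hd := d_neq0 c j; have he := e_neq0 c j; have hp := ep_neq0 c j.
have hE := ep_neq0 c n.
field; by rewrite hd he hp hE.
Qed.

End Col6.


Lemma invmxM' n (A B : 'M[rat]_n) : A \in unitmx -> B \in unitmx ->
  invmx (A *m B) = invmx B *m invmx A.
Proof.
move=> hA hB.
have h : invmx B *m invmx A *m (A *m B) = 1%:M.
  by rewrite mulmxA -(mulmxA (invmx B)) mulVmx // mulmx1 mulVmx.
by rewrite -[LHS]mul1mx -h -mulmxA mulmxV ?mulmx1 // unitmx_mul hA hB.
Qed.

Lemma mulmx_mz n (A : 'M[rat]_n) (M : 'cV[rat]_n) b : A *m (M *~ b) = (A *m M) *~ b.
Proof. exact: raddfMz. Qed.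

Section Chain.
Variables (n : nat) (g : nat -> 'cV[rat]_n).

Definition inG i (beta : 'cV[rat]_n) := exists (a : 'I_n -> int) (b : nat -> int),
  beta = \col_k (a k)%:~R + \sum_(k < i) g k *~ b k.

Lemma Cunit i : Cmat g i \in unitmx.
Proof.
elim: i => [|i IH] /=; first exact: unitmx1.
by rewrite unitmx_mul IH Q_unit.
Qed.

Lemma int_mz (M : 'cV[rat]_n) (b : int) : M \is a mxOver Num.int -> M *~ b \is a mxOver Num.int.
Proof.
move=> /mxOverP hM; rewrite -scaler_int; apply/mxOverP => x y; by rewrite mxE rpredM // intr_int.
Qed.

Lemma int_add (M N : 'cV[rat]_n) : M \is a mxOver Num.int -> N \is a mxOver Num.int ->
  M + N \is a mxOver Num.int.
Proof.
move=> /mxOverP hM /mxOverP hN; apply/mxOverP => x y; rewrite mxE; exact: rpredD.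
Qed.

Lemma sup_dir i (a : 'I_n -> int) (b : nat -> int) :
  invmx (Cmat g i) *m (\col_k (a k)%:~R + \sum_(k < i) g k *~ b k) \is a mxOver Num.int.
Proof.
elim: i b => [|i IH] b /=.
  rewrite invmx1 mul1mx big_ord0 addr0.
  by apply/mxOverP => x y; rewrite mxE intr_int.
rewrite invmxM' ?Cunit ?Q_unit // big_ord_recr /= addrA mulmxDr -!mulmxA.
apply: int_add.
  apply: mxOverM; first exact: invQ_int.
  apply/mxOverP => x y; by move/mxOverP: (IH b); apply.
rewrite !mulmx_mz; apply: int_mz.
rewrite -/(gcoord g i); exact: invQc_int.
Qed.

Lemma sub_dir i (z : 'cV[rat]_n) : z \is a mxOver Num.int -> inG i (Cmat g i *m z).
Proof.
elim: i z => [|i IH] z hz /=.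
  exists (fun k => numq (z k 0)), (fun _ => 0).
  rewrite mul1mx big_ord0 addr0; apply/matrixP => x y; rewrite mxE (ord1 y) numqK //.
  by move/mxOverP: hz.
set c := gcoord g i.
have [u hu hQ] := Qz_decomp c hz.
set t := \sum_j _ in hQ.
have ht : t \is a Num.int by apply: t_int.
rewrite -mulmxA hQ mulmxDr -scalemxAr /c /gcoord mulKVmx ?Cunit //.
have [a [b ->]] := IH u hu.
exists a, (fun k => if k == i then numq t else b k).
rewrite big_ord_recr /= eqxx -addrA; congr (_ + _).
rewrite -[t](numqK ht) scaler_int; congr (_ + _).
apply: eq_bigr => k _; rewrite ltn_eqF //.
by rewrite numq_int.
Qed.

End Chain.


Section Psi.
Variables (V : lmodType rat) (n : nat) (iota0 : 'I_n -> V).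

Definition psi (v : 'cV[rat]_n) : V := \sum_j v j 0 *: iota0 j.

Lemma psiD u v : psi (u + v) = psi u + psi v.
Proof. by rewrite /psi -big_split; apply: eq_bigr => j _; rewrite mxE scalerDl. Qed.

Lemma psi0 : psi 0 = 0.
Proof. by rewrite /psi big1 // => j _; rewrite mxE scale0r. Qed.

Lemma psiZ a v : psi (a *: v) = a *: psi v.
Proof. by rewrite /psi scaler_sumr; apply: eq_bigr => j _; rewrite mxE scalerA. Qed.

Lemma psi_mz v b : psi (v *~ b) = psi v *~ b.
Proof. by rewrite -!scaler_int psiZ. Qed.

Lemma psi_sum i (F : 'I_i -> 'cV[rat]_n) : psi (\sum_k F k) = \sum_k psi (F k).
Proof. exact: (big_morph psi psiD psi0). Qed.

Lemma psi_col (a : 'I_n -> int) : psi (\col_k (a k)%:~R) = \sum_j iota0 j *~ a j.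
Proof. by apply: eq_bigr => j _; rewrite mxE scaler_int. Qed.

Lemma psi_inj : (forall a : 'I_n -> int, \sum_j iota0 j *~ a j = 0 -> forall j, a j = 0) ->
  forall v, psi v = 0 -> v = 0.
Proof.
move=> hind v hv.
set D := \prod_j denq (v j 0).
have hD : D != 0.
  by apply/prodf_neq0 => j _; rewrite gt_eqF // denq_gt0.
have hint : forall j, (D%:~R * v j 0) \is a Num.int.
  move=> j; rewrite /D (bigD1 j) //= rmorphM /= -mulrA [_ * v j 0]mulrC.
  by rewrite mulrA [(denq _)%:~R * v j 0]mulrC -numqE -rmorphM intr_int.
have h := hind (fun j => numq (D%:~R * v j 0)).
have : \sum_j iota0 j *~ numq (D%:~R * v j 0) = 0.
  rewrite -psi_col.
  have -> : \col_k ((numq (D%:~R * v k 0))%:~R : rat) = D%:~R *: v.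
    by apply/matrixP => x y; rewrite !mxE (ord1 y) numqK.
  by rewrite psiZ hv scaler0.
move/h => hj; apply/matrixP => x y; rewrite (ord1 y) mxE.
have := hj x; move/(congr1 (fun z : int => (z%:~R : rat))); rewrite numqK //.
by move/eqP; rewrite mulf_eq0 intr_eq0 (negbTE hD) /= => /eqP.
Qed.

End Psi.

Lemma den_dvd (k : int) (x : rat) : (k%:~R * x) \is a Num.int -> (denq x %| k)%Z.
Proof.
move=> hx.
have hkx : k * numq x = numq (k%:~R * x) * denq x.
  apply: (@intr_inj rat); rewrite !rmorphM /= [(numq (_ * _))%:~R]numqK // numqE; ring.
have : (denq x %| k * numq x)%Z by rewrite hkx dvdz_mull.
rewrite Gauss_dvdzl //.
by rewrite /coprimez gcdzC; have := coprime_num_den x; rewrite /coprime.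
Qed.


Lemma psiN (V : lmodType rat) n (iota0 : 'I_n -> V) v : psi iota0 (- v) = - psi iota0 v.
Proof. by rewrite /psi -sumrN; apply: eq_bigr => j _; rewrite mxE scaleNr. Qed.

Lemma zcomb_in (V : lmodType rat) (Gam : {pred V}) n (iota0 : 'I_n -> V) :
  0 \in Gam -> {in Gam &, forall x y, x - y \in Gam} -> (forall j, iota0 j \in Gam) ->
  forall a : 'I_n -> int, \sum_j iota0 j *~ a j \in Gam.
Proof.
move=> h0 hsub hio a.
have hN : forall x, x \in Gam -> - x \in Gam by move=> x hx; rewrite -sub0r hsub.
have hD : forall x y, x \in Gam -> y \in Gam -> x + y \in Gam.
  by move=> x y hx hy; rewrite -[y]opprK hsub // hN.
have hn : forall x m, x \in Gam -> x *+ m \in Gam.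
  move=> x m hx; elim: m => [|m IH]; first by rewrite mulr0n.
  by rewrite mulrS hD.
have hZ : forall x z, x \in Gam -> x *~ z \in Gam.
  by move=> x [] m hx /=; [exact: hn | apply: hN; exact: hn].
by apply: (big_ind (fun x => x \in Gam)) => // j _; apply: hZ.
Qed.

Lemma eE (V : lmodType rat) (Gam : {pred V}) n (iota0 : 'I_n -> V)
    (g : nat -> 'cV[rat]_n) (e : nat -> nat) i :
  0 \in Gam -> {in Gam &, forall x y, x - y \in Gam} ->
  (forall j, iota0 j \in Gam) ->
  (forall a : 'I_n -> int, \sum_j iota0 j *~ a j = 0 -> forall j, a j = 0) ->
  (0 < e i)%N ->
  (forall k, (0 < k < e i)%N -> ~ inGammaMu Gam (fun i => psi iota0 (g i)) i
                                      (psi iota0 (g i) *+ k)) ->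
  (exists (a : 'I_n -> int) (b : nat -> int),
      psi iota0 (g i) *+ e i = \sum_j iota0 j *~ a j + \sum_(k < i) psi iota0 (g k) *~ b k) ->
  (e i)%:Z = eprime (gcoord g i) n.
Proof.
move=> h0 hsub hio hind he hmin [a [b hh]].
set c := gcoord g i.
have hv : (e i)%:R *: g i = \col_k (a k)%:~R + \sum_(k < i) g k *~ b k.
  apply/eqP; rewrite -subr_eq0; apply/eqP; apply: (psi_inj hind).
  rewrite psiD psiN psiZ psiD psi_col psi_sum scaler_nat hh.
  have -> : \sum_(k < i) psi iota0 (g k *~ b k) = \sum_(k < i) psi iota0 (g k) *~ b k.
    by apply: eq_bigr => k _; rewrite psi_mz.
  by rewrite subrr.
have hec : (e i)%:R *: c \is a mxOver Num.int.
  by rewrite /c /gcoord scalemxAr hv; exact: sup_dir.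
have hdiv : forall m : 'I_n, (ecoef c m %| (e i)%:Z)%Z.
  move=> m; apply: den_dvd; move/mxOverP: hec => /(_ m 0); rewrite mxE //.
have hEe : (lcmN c n %| e i)%N.
  apply: lcmN_dvd => m hm; have := hdiv (Ordinal hm).
  by rewrite -ecnE -ecn_abs.
have hle : (lcmN c n <= e i)%N := dvdn_leq he hEe.
rewrite eprimeE.
set N := lcmN c n.
have hN : (0 < N)%N by apply: lcmN_gt0.
have hEc : (N%:R : rat) *: c \is a mxOver Num.int.
  apply/mxOverP => m y; rewrite (ord1 y) mxE cE mulrA.
  have -> : (N%:R : rat) = (N%:Z)%:~R by [].
  rewrite -rmorphM /=; apply: Qint_dvdz; apply: dvdz_mulr.
  rewrite -eprimeE; exact: e_dvd_ep.
have [a' [b' hab]] := sub_dir g i hEc.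
rewrite -scalemxAr /c /gcoord mulKVmx ?Cunit // in hab.
have hin : inGammaMu Gam (fun i => psi iota0 (g i)) i (psi iota0 (g i) *+ N).
  exists (\sum_j iota0 j *~ a' j); first exact: zcomb_in.
  exists b'; rewrite -scaler_nat -psiZ hab psiD psi_col psi_sum; congr (_ + _).
  by apply: eq_bigr => k _; rewrite psi_mz.
case: (ltngtP N (e i)) => h.
- by exfalso; apply: (hmin N) => //; rewrite hN h.
- by move: hle; rewrite leqNgt h.
- by rewrite h.
Qed.


Section Prod.
Variables (F : fieldType) (I : finType).

Lemma prodXz (a : I -> F) (z : int) : (\prod_k a k) ^ z = \prod_k a k ^ z.
Proof.
apply: (big_ind2 (fun x y => x ^ z = y)) => [|x1 x2 y1 y2 <- <-|k _] //.
  by rewrite exp1rz.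
by rewrite expfzMl.
Qed.

Lemma prod_sumexp (x : F) (z : I -> int) : x != 0 -> \prod_k x ^ z k = x ^ (\sum_k z k).
Proof.
move=> hx.
apply: (big_ind2 (fun u s => u = x ^ s)) => [|x1 x2 y1 y2 -> ->|k _] //.
  by rewrite expfzDr.

Qed.

Lemma prodXzD (a : I -> F) (z1 z2 : I -> int) : (forall k, a k != 0) ->
  \prod_k a k ^ z1 k * \prod_k a k ^ z2 k = \prod_k a k ^ (z1 k + z2 k).
Proof.
move=> ha; rewrite -big_split; apply: eq_bigr => k _; by rewrite expfzDr.
Qed.

End Prod.

Lemma ratio_formula (F : fieldType) n (Phi : F) (p : 'I_n -> F) (w : 'I_n -> int)
   (M : 'I_n -> 'I_n -> int) (X Y Zc : 'I_n -> int) (E Lz : int) :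
  Phi != 0 -> (forall k, p k != 0) ->
  \sum_j w j * Y j = E * Lz ->
  (forall k, \sum_j M k j * Y j - X k = Zc k * Lz) ->
  (\prod_j (Phi ^ w j * \prod_k p k ^ M k j) ^ Y j) / (\prod_k p k ^ X k)
   = (Phi ^ E * \prod_k p k ^ Zc k) ^ Lz.
Proof.
move=> hP hp h1 h2.
have -> : \prod_j (Phi ^ w j * \prod_k p k ^ M k j) ^ Y j =
          \prod_j (Phi ^ (w j * Y j) * \prod_k p k ^ (M k j * Y j)).
  apply: eq_bigr => j _; rewrite expfzMl exprz_exp prodXz; congr (_ * _).
  by apply: eq_bigr => k _; rewrite exprz_exp.
rewrite big_split /= prod_sumexp // h1 exchange_big /=.
have -> : \prod_k \prod_j p k ^ (M k j * Y j) = \prod_k p k ^ (\sum_j M k j * Y j).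
  by apply: eq_bigr => k _; rewrite prod_sumexp.
rewrite -mulrA -prodfV.
have -> : \prod_k (p k ^ X k)^-1 = \prod_k p k ^ (- X k).
  by apply: eq_bigr => k _; rewrite invr_expz.
rewrite prodXzD // expfzMl exprz_exp prodXz; congr (_ * _).
by apply: eq_bigr => k _; rewrite h2 exprz_exp.
Qed.


Definition Mm n (c : 'cV[rat]_n) (k j : 'I_n) : int :=
  if (k < j)%N then - ((hcoef c k * ellcoef c j * epcoef c j) %/ ecoef c k)%Z
  else if k == j then ellpcoef c j else 0.

Lemma piv_neq0 (K : fieldType) n g phi (pi0 : 'I_n -> K) i j :
  (forall k, (k < i)%N -> phi k != 0) -> (forall j, pi0 j != 0) ->
  piv g phi pi0 i j != 0.
Proof.
elim: i j => [|i IH] j hphi hpi /=.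
  by rewrite /toK tofrac_eq0 polyC_eq0.
have IH' : forall k, piv g phi pi0 i k != 0.
  by move=> k; apply: IH => // m hm; apply: hphi; apply: ltnW.
rewrite !mulf_neq0 ?expfz_neq0 //.
  by rewrite /toK tofrac_eq0 hphi.
by apply/prodf_neq0 => k _; rewrite expfz_neq0.
Qed.

Lemma pivS (K : fieldType) n g phi (pi0 : 'I_n -> K) i j :
  piv g phi pi0 i.+1 j =
  toK (phi i) ^ (ellcoef (gcoord g i) j * epcoef (gcoord g i) j)
  * \prod_k piv g phi pi0 i k ^ Mm (gcoord g i) k j.
Proof.
rewrite /= -mulrA; congr (_ * _).
set c := gcoord g i; set p := piv g phi pi0 i.
rewrite [RHS](bigD1 j) //= {1}/Mm ltnn eqxx [RHS]mulrC; congr (_ * _).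
rewrite big_mkcond [RHS]big_mkcond; apply: eq_bigr => k _ /=.
case: ltnP => hkj.
  have -> : (k != j) = true by rewrite -val_eqE /= neq_ltn hkj.
  by rewrite /Mm hkj.
case: eqP => [_|hne] //=.
rewrite /Mm ltnNge hkj /=.
by rewrite (introF eqP hne) expr0z.
Qed.

Section Ident.
Variables (n : nat) (c : 'cV[rat]_n).
Local Notation w j := (((ellcoef c j * epcoef c j)%:~R : rat)).

Lemma ident1 (y : 'cV[rat]_n) :
  \sum_j w j * y j 0 = (eprime c n)%:~R * \sum_m (Qmat c *m y) m 0 * (Lcoef c m)%:~R.
Proof.
have -> : \sum_m (Qmat c *m y) m 0 * (Lcoef c m)%:~R
        = \sum_j y j 0 * (\sum_m (Lcoef c m)%:~R * Qmat c m j).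
  under eq_bigr => m _ do rewrite mxE mulr_suml.
  rewrite exchange_big /=; apply: eq_bigr => j _; rewrite mulr_sumr.
  by apply: eq_bigr => m _; ring.
under [in RHS]eq_bigr => j _ do rewrite COL.
rewrite mulr_sumr; apply: eq_bigr => j _.
have hE := ep_neq0 c n; field; exact: hE.
Qed.

Lemma ident2 (y : 'cV[rat]_n) k :
  \sum_j (Mm c k j)%:~R * y j 0 - (Qmat c *m y) k 0 = - c k 0 * \sum_j w j * y j 0.
Proof.
rewrite mxE -sumrB mulr_sumr; apply: eq_bigr => j _.
rewrite -mulrBl mulrA; congr (_ * _).
rewrite QE /Mm.
case: (ltnP k j) => hkj.
  have -> : (k == j) = false by rewrite -val_eqE /= ltn_eqF.
  rewrite ifF; last first.
    by apply/negbTE; rewrite -leqNgt ltnW.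
  rewrite mulrNz divz_q; last first.
    by apply: dvdz_mull; apply: e_dvd_ep.
  rewrite cE !rmorphM /=; ring.
case: eqP => [->|hne].
  by rewrite -(R2q c j); ring.
rewrite ifT; first by ring.
by rewrite ltn_neqAle hkj andbT; apply/eqP => h; apply: hne; apply: val_inj.
Qed.

End Ident.

End Helpers.
Import Helpers.

Theorem mainTheorem7 (K : fieldType) (V : lmodType rat) (Gam : {pred V}) (n r : nat)
    (iota0 : 'I_n -> V) (g : nat -> 'cV[rat]_n) (e : nat -> nat)
    (phi : nat -> {poly K}) (pi0 : 'I_n -> K) :
  (* Gamma is a non-trivial subgroup of V, and V = Gamma (x) Q *)
  0 \in Gam ->
  {in Gam &, forall x y, x - y \in Gam} ->
  (exists2 x, x \in Gam & x != 0) ->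
  (forall x : V, exists2 k, (0 < k)%N & x *+ k \in Gam) ->
  (* iota0 is a Z-basis of a subgroup Gamma_{-1} of Gamma *)
  (forall j, iota0 j \in Gam) ->
  (forall a : 'I_n -> int, \sum_j iota0 j *~ a j = 0 -> forall j, a j = 0) ->
  let gam := fun i => \sum_j g i j 0 *: iota0 j in
  (* e_i = (Gamma_{mu_i} : Gamma_{mu_{i-1}}) = order of gamma_i modulo Gamma_{mu_{i-1}} *)
  (forall i, (i <= r)%N ->
     [/\ (0 < e i)%N, inGammaMu Gam gam i (gam i *+ e i)
       & forall k, (0 < k < e i)%N -> ~ inGammaMu Gam gam i (gam i *+ k)]) ->
  (* h_i in Gamma_{-1} + <gamma_0, ..., gamma_{i-1}> *)
  (forall i, (i <= r)%N -> exists (a : 'I_n -> int) (b : nat -> int),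
       gam i *+ e i = \sum_j iota0 j *~ a j + \sum_(k < i) gam k *~ b k) ->
  (* key polynomials are monic; pi_{0,j} in K^* *)
  (forall i, (i <= r)%N -> phi i \is monic) ->
  (forall j, pi0 j != 0) ->
  forall i, (i <= r)%N ->
  forall (a : 'I_n -> int) (b : nat -> int),
    (* beta = sum_j a_j iota_{0,j} + sum_{k<i} b_k gamma_k, an arbitrary element of Gamma_{i-1},
       written in coordinates w.r.t. iota_0 *)
    let beta : 'cV[rat]_n := (\col_k (a k)%:~R) + \sum_(k < i) g k *~ b k in
    Lval g i beta \is a Num.int /\
    piPow g phi pi0 i.+1 beta / piPow g phi pi0 i beta
      = Yi g phi pi0 e i ^ numq (Lval g i beta).
Proof.
move=> h0 hsub _ _ hio hind gam hord hh hmon hpi0 i hi a b beta.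
have [he _ hmin] := hord i hi.
set c := gcoord g i.
have heE : (e i)%:Z = eprime c n.
  exact: (eE h0 hsub hio hind he hmin (hh i hi)).
have hCu : Cmat g i \in unitmx := Cunit g i.
have hQu : Qmat c \in unitmx := Q_unit c.
set x := invmx (Cmat g i) *m beta.
have hx : x \is a mxOver Num.int by exact: sup_dir.
set y := invmx (Qmat c) *m x.
have hy : y \is a mxOver Num.int by apply: mxOverM; [exact: invQ_int | exact: hx].
have hxy : x = Qmat c *m y by rewrite /y mulKVmx.
have hC1 : invmx (Cmat g i.+1) *m beta = y.
  have -> : Cmat g i.+1 = Cmat g i *m Qmat c by [].
  by rewrite invmxM' // -mulmxA.
have hLv : Lval g i beta = \sum_j x j 0 * (Lcoef c j)%:~R by [].
have hLint : Lval g i beta \is a Num.int.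
  rewrite hLv; apply: rpred_sum => j _; apply: rpredM; last exact: intr_int.
  by move/mxOverP: hx.
split => //.
set Zv := invmx (Cmat g i) *m (- ((e i)%:R *: g i)).
have hZv : forall k, Zv k 0 = - ((eprime c n)%:~R * c k 0).
  move=> k; rewrite /Zv mulmxN -scalemxAr -/(gcoord g i) -/c !mxE.
  by congr (- (_ * _)); rewrite -heE.
have hZint : forall k, Zv k 0 \is a Num.int.
  move=> k; rewrite hZv rpredN cE mulrA -rmorphM /=; apply: Qint_dvdz.
  by apply: dvdz_mulr; apply: e_dvd_ep.
have hPhi : toK (phi i) != 0 by rewrite /toK tofrac_eq0 monic_neq0 // hmon.
have hp : forall k, piv g phi pi0 i k != 0.
  move=> k; apply: piv_neq0 => // m hm; apply: monic_neq0; apply: hmon.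
  exact: leq_trans (ltnW hm) hi.
have H1 : \sum_j (ellcoef c j * epcoef c j) * numq (y j 0) = (e i)%:Z * numq (Lval g i beta).
  apply: (@intr_inj rat); rewrite rmorph_sum [RHS]intrM numqK //.
  have -> : \sum_j ((ellcoef c j * epcoef c j * numq (y j 0))%:~R : rat) =
            \sum_j (ellcoef c j * epcoef c j)%:~R * y j 0.
    apply: eq_bigr => j _; rewrite [LHS]intrM numqK //; by move/mxOverP: hy.
  by rewrite ident1 heE hLv hxy.
have H2 : forall k, \sum_j Mm c k j * numq (y j 0) - numq (x k 0) =
                    numq (Zv k 0) * numq (Lval g i beta).
  move=> k; apply: (@intr_inj rat).
  rewrite rmorphB rmorph_sum /= [RHS]intrM !numqK //; last by move/mxOverP: hx.
  have -> : \sum_j ((Mm c k j * numq (y j 0))%:~R : rat) =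
            \sum_j (Mm c k j)%:~R * y j 0.
    apply: eq_bigr => j _; rewrite [LHS]intrM numqK //; by move/mxOverP: hy.
  rewrite hZv hLv [in LHS]hxy ident2 ident1 -hxy; ring.
have := ratio_formula (Phi:=toK (phi i)) (p:=piv g phi pi0 i)
  (w:=fun j => ellcoef c j * epcoef c j) (M:=Mm c) (X:=fun k => numq (x k 0))
  (Y:=fun j => numq (y j 0)) (Zc := fun k => numq (Zv k 0)) (E:=(e i)%:Z)
  (Lz := numq (Lval g i beta)) hPhi hp H1 H2.
move=> <-.
rewrite /piPow /piexp hC1 -/x.
congr (_ / _); apply: eq_bigr => j _; by rewrite pivS.
Qed.
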